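(* Let $\Gamma$ be a totally ordered abelian group, written additively, and let $S=\Gamma_{\geq 0}$ be the submonoid of its nonnegative elements. Let $K$ be any field and let $D=K[x^S]$ be the semigroup algebra of $S$ over $K$. Then the reciprocal complement $R(D)$ is a valuation ring with value group $\Gamma$.
   Context: For an integral domain $D$ with fraction field $F$, the reciprocal complement $R(D)$ is the subring of $F$ generated by all elements $1/d$ with $d\in D\setminus\{0\}$; equivalently, the set of all finite sums $\sum_{i=1}^n 1/d_i$ with $d_i\in D\setminus\{0\}$, $n\ge 0$. *)

(* Defs.v *)
From HB Require Import structures.
From mathcomp Require Import all_boot all_order all_algebra.
From mathcomp Require Import finmap.
From mathcomp.multinomials Require Import monalg.
Set Implicit Arguments. Unset Strict Implicit. Unset Printing Implicit Defensive.
Import Order.TTheory GRing.Theory Num.Theory.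
Local Open Scope ring_scope.

HB.mixin Record Zmod_isTotOrdGroup G of Num.POrderedZmodule G := {
  le_total_tog : total (<=%O : rel G);
  lerD2r_tog : forall x y z : G, x <= y -> x + z <= y + z
}.

#[short(type="totOrdAbGroup")]
HB.structure Definition TotOrdAbGroup :=
  { G of Num.POrderedZmodule G & Zmod_isTotOrdGroup G }.

Section NonNeg.
Variable G : totOrdAbGroup.

Definition nnegG := {x : G | 0 <= x}.

HB.instance Definition _ := Choice.on nnegG.

Lemma nnegG0 : (0 : G) <= 0. Proof. by []. Qed.

Lemma nnegGD (x y : G) : 0 <= x -> 0 <= y -> 0 <= x + y.
Proof.
move=> hx hy; have := lerD2r_tog 0 x y hx; rewrite add0r => h.
exact: le_trans hy h.
Qed.

Definition nnegG_one : nnegG := exist _ 0 nnegG0.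
Definition nnegG_add (x y : nnegG) : nnegG :=
  exist _ (sval x + sval y) (nnegGD (svalP x) (svalP y)).

Lemma nnegG_addA : associative nnegG_add.
Proof. by move=> x y z; apply: val_inj; rewrite /= addrA. Qed.
Lemma nnegG_add0 : left_id nnegG_one nnegG_add.
Proof. by move=> x; apply: val_inj; rewrite /= add0r. Qed.
Lemma nnegG_addr0 : right_id nnegG_one nnegG_add.
Proof. by move=> x; apply: val_inj; rewrite /= addr0. Qed.
Lemma nnegG_addC : commutative nnegG_add.
Proof. by move=> x y; apply: val_inj; rewrite /= addrC. Qed.

Lemma nnegG_unit (x y : nnegG) :
  nnegG_add x y = nnegG_one -> x = nnegG_one /\ y = nnegG_one.
Proof.
case: x y => [x hx] [y hy] /(congr1 val) /= hxy.
have hyx : y = - x by apply/eqP; rewrite -subr_eq0 opprK addrC hxy.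
have hx' : x <= 0.
  have := lerD2r_tog 0 y (- y) hy; by rewrite subrr add0r hyx opprK.
have x0 : x = 0 by apply/eqP; rewrite eq_le hx' hx.
by split; apply: val_inj => //=; rewrite hyx x0 oppr0.
Qed.

HB.instance Definition _ := Choice_isMonomialDef.Build nnegG
  nnegG_addA nnegG_add0 nnegG_addr0 nnegG_unit.
HB.instance Definition _ := MonomialDef_isConomialDef.Build nnegG nnegG_addC.

End NonNeg.

Notation semigroup_algebra K G := {malg K[nnegG G]}.

Definition is_fraction_field (D : comRingType) (F : fieldType)
    (phi : {rmorphism D -> F}) : Prop :=
  injective phi /\ forall z : F, exists a b : D, b != 0 /\ z = phi a / phi b.

Definition recip_compl (D : comRingType) (F : fieldType) (phi : D -> F)
    (z : F) : Prop :=
  exists s : seq D, all (fun d => d != 0) s /\ z = \sum_(d <- s) (phi d)^-1.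

Definition is_valuation_ring (F : fieldType) (V : F -> Prop) : Prop :=
  forall z : F, z != 0 -> V z \/ V z^-1.

(* The value group F^x / V^x of V (ordered by divisibility) is order-isomorphic
   to G: equivalently there is a surjective group morphism v : F^x -> G with
   V \ {0} = {v >= 0}; such a v induces F^x/V^x ~= G as ordered groups. *)
Definition has_value_group (F : fieldType) (V : F -> Prop)
    (G : totOrdAbGroup) : Prop :=
  exists v : F -> G,
    [/\ forall x y : F, x != 0 -> y != 0 -> v (x * y) = v x + v y,
        forall g : G, exists x : F, x != 0 /\ v x = g
      & forall x : F, x != 0 -> (V x <-> 0 <= v x)].

(* Main.v *)
Require Import Defs.
From HB Require Import structures.
From mathcomp Require Import all_boot all_order all_algebra.
From mathcomp Require Import finmap.
From mathcomp.multinomials Require Import monalg.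
From Stdlib Require Import ClassicalEpsilon.
From mathcomp Require Import ring.
Import Order.TTheory GRing.Theory Num.Theory.
Local Open Scope ring_scope.
Set Implicit Arguments. Unset Strict Implicit.

Section Ord.
Variable G : totOrdAbGroup.
Implicit Types x y z : G.

Lemma tlerD2r x y z : (x + z <= y + z) = (x <= y).
Proof.
apply/idP/idP; last exact: lerD2r_tog.
by move=> /(lerD2r_tog _ _ (- z)); rewrite -!addrA subrr !addr0.
Qed.

Lemma tlerD2l x y z : (z + x <= z + y) = (x <= y).
Proof. by rewrite ![z + _]addrC tlerD2r. Qed.

Lemma tltrD2r x y z : (x + z < y + z) = (x < y).
Proof. by rewrite !lt_def tlerD2r (inj_eq (addIr z)). Qed.

Lemma tltrD2l x y z : (z + x < z + y) = (x < y).
Proof. by rewrite ![z + _]addrC tltrD2r. Qed.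

Lemma tle_total_ x y : (x <= y) || (y <= x).
Proof. exact: le_total_tog. Qed.
Definition tle_total := tle_total_.

Lemma tltNge x y : (x < y) = ~~ (y <= x).
Proof.
rewrite lt_def; case: (boolP (y <= x)) => hyx /=.
  case: (boolP (x <= y)) => hxy; last by rewrite andbF.
  by rewrite (le_anti (introT andP (conj hxy hyx))) eqxx.
have := tle_total x y; rewrite (negbTE hyx) orbF => ->; rewrite andbT.
by apply: contraNneq hyx => ->.
Qed.

Lemma tsubr_ge0 x y : (0 <= y - x) = (x <= y).
Proof. by rewrite -(tlerD2r 0 _ x) add0r subrK. Qed.

Lemma tle0N x : x <= 0 -> 0 <= - x.
Proof. by move=> h; rewrite -(tlerD2r _ _ x) addNr add0r. Qed.

Lemma tlerD x y z : 0 <= z -> x <= y -> x <= y + z.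
Proof.
move=> hz hxy; apply: le_trans hxy _.
by rewrite -{1}(addr0 y) tlerD2l.
Qed.

Lemma tlerDD x1 x2 y1 y2 : x1 <= y1 -> x2 <= y2 -> x1 + x2 <= y1 + y2.
Proof.
move=> h1 h2; apply: (@le_trans _ _ (y1 + x2)); first by rewrite tlerD2r.
by rewrite tlerD2l.
Qed.
End Ord.
Section Lead.
Variables (G : totOrdAbGroup) (K : fieldType).
Local Notation D := (semigroup_algebra K G).
Local Notation M := (nnegG G).
Implicit Types (a b g : D) (s t : M).

Lemma valM s t : val (mmul s t) = val s + val t. Proof. by []. Qed.
Lemma val1 : val (mone : M) = 0. Proof. by []. Qed.
Lemma valP0 s : 0 <= val s. Proof. exact: (svalP s). Qed.

Definition bnd g (x : G) := forall s, s \in msupp g -> val s <= x.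

Definition isLead g s : bool :=
  (s \in msupp g) && all (fun s' : M => val s' <= val s) (msupp g).

Lemma seq_max (l : seq M) : l != [::] ->
  exists2 s, s \in l & all (fun s' : M => val s' <= val s) l.
Proof.
elim: l => // x l IH _; case: (altP (l =P [::])) => [->|ne].
  by exists x; rewrite ?inE ?eqxx //= lexx.
have [s sl hs] := IH ne; case/orP: (tle_total (val x) (val s)) => h.
  by exists s; rewrite /= ?inE ?sl ?orbT ?h.
exists x; first by rewrite inE eqxx.
rewrite /= lexx /=; apply/allP => y yl; exact: le_trans (allP hs y yl) h.
Qed.

Lemma lead_ex0 g : exists s, (g == 0) || isLead g s.
Proof.
case: (altP (g =P 0)) => [->|gn0]; first by exists mone.
have : (msupp g : seq M) != [::].
  apply: contra gn0 => /eqP h; rewrite -msupp_eq0; apply/eqP/fsetP => x.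
  by rewrite in_fset0; apply/negbTE; rewrite -[x \in msupp g]/(x \in (msupp g : seq M)) h.
move/seq_max => [s sl hs]; exists s; by rewrite /isLead sl hs orbT.
Qed.

Definition lead g := xchoose (lead_ex0 g).
Definition deg g : G := val (lead g).

Lemma leadP g : g != 0 -> isLead g (lead g).
Proof. by move=> gn0; have /orP[|//] := xchooseP (lead_ex0 g); rewrite (negbTE gn0). Qed.

Lemma lead_uniq g s : isLead g s -> lead g = s.
Proof.
move=> hs; have gn0 : g != 0.
  by apply: contraTneq hs => ->; rewrite /isLead msupp0 inE.
have := leadP gn0; case/andP: hs => s1 a1 /andP[s2 a2]; apply: val_inj.
by apply: le_anti; rewrite (allP a1 _ s2) (allP a2 _ s1).
Qed.

Lemma lead_in g : g != 0 -> lead g \in msupp g.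
Proof. by move/leadP/andP=> []. Qed.

Lemma bnd_deg g : bnd g (deg g).
Proof.
case: (altP (g =P 0)) => [->|gn0] s; first by rewrite msupp0 inE.
by move: (leadP gn0) => /andP[_ /allP]; apply.
Qed.

Lemma deg_le_bnd g x : g != 0 -> bnd g x -> deg g <= x.
Proof. by move=> gn0; apply; apply: lead_in. Qed.

Lemma bnd_le g x y : bnd g x -> x <= y -> bnd g y.
Proof. by move=> h xy s /h sx; apply: le_trans xy. Qed.

Lemma bnd0 x : bnd 0 x. Proof. by move=> s; rewrite msupp0 inE. Qed.

Lemma bndD g1 g2 x : bnd g1 x -> bnd g2 x -> bnd (g1 + g2) x.
Proof.
move=> h1 h2 s /(fsubsetP (msuppD_le _ _)); rewrite inE => /orP[]; auto.
Qed.

Lemma bndM g1 g2 x y : bnd g1 x -> bnd g2 y -> bnd (g1 * g2) (x + y).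
Proof.
move=> h1 h2 s /msuppM_le [k1 [k2 [k1g k2g ->]]].
by rewrite valM; apply: tlerDD; auto.
Qed.

End Lead.
Section Mul.
Variables (G : totOrdAbGroup) (K : fieldType).
Local Notation D := (semigroup_algebra K G).
Local Notation M := (nnegG G).
Implicit Types (a b g : D) (s t : M).

Lemma mcoeff_lead a b : a != 0 -> b != 0 ->
  (a * b)@_(mmul (lead a) (lead b)) = a@_(lead a) * b@_(lead b).
Proof.
move=> an0 bn0; set la := lead a; set lb := lead b.
have hla := @bnd_deg _ _ a; have hlb := @bnd_deg _ _ b.
rewrite mcoeffMl (bigD1_seq la) ?lead_in ?fset_uniq //=.
rewrite (bigD1_seq lb) ?lead_in ?fset_uniq //= eqxx mulr1n.
rewrite big1_seq ?addr0; last first.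
  move=> k2 /andP[k2n k2s]; case: eqP => // /(congr1 val); rewrite !valM => h.
  have : val k2 < val lb.
    by rewrite lt_def (hlb _ k2s) andbT (inj_eq val_inj) eq_sym.
 
  by rewrite -(tltrD2l _ _ (val la)) h ltxx.
rewrite big1_seq ?addr0 //. move=> k1 /andP[k1n k1s].
rewrite big1_seq // => k2 k2s; case: eqP => // /(congr1 val); rewrite !valM => h.
have : val k1 < val la by rewrite lt_def (hla _ k1s) andbT (inj_eq val_inj) eq_sym.
rewrite -(tltrD2r _ _ (val k2)) h => h2.
have := hlb _ k2s; rewrite -(tlerD2l _ _ (val la)) => h3.
by move: (lt_le_trans h2 h3); rewrite ltxx.
Qed.

Lemma lc_neq0 a : a != 0 -> a@_(lead a) != 0.
Proof. by move=> an0; rewrite mcoeff_neq0 lead_in. Qed.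

Lemma mulD_neq0 a b : a != 0 -> b != 0 -> a * b != 0.
Proof.
move=> an0 bn0; apply/eqP => h.
have := mcoeff_lead an0 bn0; rewrite h mcoeff0 => /esym /eqP.
by rewrite mulf_eq0 (negbTE (lc_neq0 an0)) (negbTE (lc_neq0 bn0)).
Qed.

Lemma degM a b : a != 0 -> b != 0 -> deg (a * b) = deg a + deg b.
Proof.
move=> an0 bn0; rewrite /deg (@lead_uniq _ _ (a * b) (mmul (lead a) (lead b))) //.
apply/andP; split.
  by rewrite -mcoeff_neq0 mcoeff_lead // mulf_neq0 ?lc_neq0.
apply/allP => s /(bndM (@bnd_deg _ _ a) (@bnd_deg _ _ b)); by rewrite valM.
Qed.

End Mul.
Section Recip.
Variables (G : totOrdAbGroup) (K : fieldType) (F : fieldType).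
Local Notation D := (semigroup_algebra K G).
Local Notation M := (nnegG G).
Variable phi : {rmorphism D -> F}.
Hypothesis phi_inj : injective phi.
Local Notation R := (recip_compl phi).

Lemma phi_neq0 d : d != 0 -> phi d != 0.
Proof. by apply: contraNneq => h; apply/eqP/phi_inj; rewrite h rmorph0. Qed.

Lemma R0 : R 0.
Proof. by exists [::]; rewrite big_nil. Qed.

Lemma Rinv d : d != 0 -> R (phi d)^-1.
Proof. by move=> dn0; exists [:: d]; rewrite /= dn0 big_seq1. Qed.

Lemma RD x y : R x -> R y -> R (x + y).
Proof.
move=> [s1 [h1 ->]] [s2 [h2 ->]]; exists (s1 ++ s2).
by rewrite all_cat h1 h2 big_cat.
Qed.

Lemma RN x : R x -> R (- x).
Proof.
move=> [s [h ->]]; exists (map (fun d => - d) s); split.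
  by rewrite all_map; apply: sub_all h => d /=; rewrite oppr_eq0.
by rewrite big_map -sumrN; apply: eq_bigr => d _; rewrite rmorphN invrN.
Qed.

Lemma Rinv_mul d x : d != 0 -> R x -> R ((phi d)^-1 * x).
Proof.
move=> dn0 [s [h ->]]; exists (map (fun e => d * e) s); split.
  by rewrite all_map; apply/allP => e es /=; rewrite mulD_neq0 // (allP h).
rewrite big_map big_distrr /=; apply: eq_bigr => e _.
by rewrite rmorphM invfM.
Qed.

Lemma RM x y : R x -> R y -> R (x * y).
Proof.
move=> [s [h ->]] hy; elim: s h => [|d s IH] /=.
  move=> _; rewrite big_nil mul0r. exact: R0.
case/andP => dn0 hs; rewrite big_cons mulrDl; apply: RD; last exact: IH.
exact: Rinv_mul.
Qed.

Lemma RC c : R (phi c%:MP).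
Proof.
case: (altP (c =P 0)) => [->|cn0]; first by rewrite malgC0E rmorph0; exact: R0.
have h : phi c%:MP = (phi (c^-1)%:MP)^-1.
  apply: (@mulIf _ (phi (c^-1)%:MP)).
    by apply: phi_neq0; rewrite -malgC0E malgC_eq invr_eq0.
  rewrite mulVf; last by apply: phi_neq0; rewrite -malgC0E malgC_eq invr_eq0.
  by rewrite -rmorphM -mpolyCM divff // mpolyC1E rmorph1.
rewrite h; apply: Rinv; by rewrite -malgC0E malgC_eq invr_eq0.
Qed.

End Recip.
Lemma count_lt (T : eqType) (P Q : pred T) (l : seq T) x :
  (forall y, P y -> Q y) -> x \in l -> Q x -> ~~ P x -> (count P l < count Q l)%N.
Proof.
move=> PQ; elim: l => //= y l IH; rewrite inE => /orP [/eqP <-|xl] Qx nPx.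
  rewrite Qx (negbTE nPx) /= add0n add1n ltnS; exact: sub_count.
have := IH xl Qx nPx; case hp: (P y); first by rewrite (PQ _ hp) /= !add1n ltnS.
by rewrite add0n => h; apply: leq_trans h _; rewrite leq_addl.
Qed.

Section Key.
Variables (G : totOrdAbGroup) (K : fieldType) (F : fieldType).
Local Notation D := (semigroup_algebra K G).
Local Notation M := (nnegG G).
Variable phi : {rmorphism D -> F}.
Hypothesis phi_inj : injective phi.
Local Notation R := (recip_compl phi).
Implicit Types (g q r : D) (s t : M).

Definition nsub s t : M := insubd (mone : M) (val s - val t).

Lemma nsubK s t : val t <= val s -> mmul t (nsub s t) = s.
Proof.
move=> h; apply: val_inj; rewrite valM val_insubd.
have -> : (0 <= val s - val t) by rewrite tsubr_ge0.
by rewrite addrC subrK.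
Qed.

Lemma malgU_C c t : << c *g t >> = c%:MP * (<< t >> : D).
Proof.
apply/malgP => k; rewrite mcoeffCM !mcoeffU; exact: (esym (mulr_natr _ _)).
Qed.

Lemma mulUU t c u : (<< t >> : D) * << c *g u >> = << c *g mmul t u >>.
Proof. by rewrite malgM_def fgmulUU mul1r. Qed.

Lemma R_sum (l : seq M) (P : pred M) (Fn : M -> F) :
  (forall s, s \in l -> P s -> R (Fn s)) -> R (\sum_(s <- l | P s) Fn s).
Proof.
elim: l => [|y l IH] h; first by rewrite big_nil; exact: R0.
rewrite big_cons; case: ifP => Py.
  apply: RD; first by apply: h; rewrite ?inE ?eqxx.
  by apply: IH => s sl; apply: h; rewrite inE sl orbT.
by apply: IH => s sl; apply: h; rewrite inE sl orbT.
Qed.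

Lemma recip_key (n : nat) : forall g t, g != 0 -> val t <= deg g ->
  (count (fun s : M => (val s < val t)%R) (msupp g) < n)%N ->
  R (phi << t >> / phi g).
Proof.
elim: n => // n IH g t gn0 tdeg hc.
pose q : D := \sum_(s <- msupp g | val t <= val s) << g@_s *g nsub s t >>.
pose r : D := \sum_(s <- msupp g | ~~ (val t <= val s)) << g@_s *g s >>.
have gE : g = << t >> * q + r.
  rewrite {1}[g]monalgE (bigID (fun s : M => val t <= val s)) /=; congr (_ + _).
  rewrite /q mulr_sumr; apply: eq_bigr => s hs; by rewrite mulUU nsubK.
have rl : r@_(lead g) = 0.
  rewrite /r raddf_sum /=; apply: big1_seq => s /andP[hs _].
  rewrite mcoeffU; case: eqP => // e; move: hs; rewrite e.
  by rewrite tdeg.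
have qn0 : q != 0.
  apply: contra_neq (lc_neq0 gn0) => q0.
  by move: (congr1 (mcoeff (lead g)) gE); rewrite q0 mulr0 add0r rl.
have hg : phi g = phi << t >> * phi q + phi r by rewrite {1}gE rmorphD rmorphM.
have pgn0 := phi_neq0 phi_inj gn0; have pqn0 := phi_neq0 phi_inj qn0.
have -> : phi << t >> / phi g = (phi q)^-1 - (phi q)^-1 * (phi r / phi g).
  have -> : phi r = phi g - phi << t >> * phi q by rewrite hg addrC addKr.
  by field; apply/andP.
apply: RD; first exact: Rinv.
apply: RN; apply: RM; first exact: Rinv.
rewrite /r rmorph_sum mulr_suml; apply: R_sum => s sg nts.
rewrite malgU_C rmorphM -mulrA; apply: RM; first exact: RC.
apply: IH => //; first exact: bnd_deg.
have hst : val s < val t by rewrite tltNge.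
have h := @count_lt _ (fun y : M => (val y < val s)%R) (fun y : M => (val y < val t)%R)
  (msupp g) s (fun y hy => lt_trans hy hst) sg hst (negbT (ltxx _)).
by apply: leq_trans h _; rewrite -ltnS.
Qed.

End Key.
Section Main.
Variables (G : totOrdAbGroup) (K : fieldType) (F : fieldType).
Local Notation D := (semigroup_algebra K G).
Local Notation M := (nnegG G).
Variable phi : {rmorphism D -> F}.
Hypothesis hff : is_fraction_field phi.
Local Notation R := (recip_compl phi).
Implicit Types (a b c d g : D) (s t : M).

Let phi_inj : injective phi := hff.1.

Definition V' (z : F) := exists a b, [/\ b != 0, bnd a (deg b) & z = phi a / phi b].

Lemma deg_ge0 d : 0 <= deg d.
Proof. exact: valP0. Qed.

Lemma R_V' z : R z -> V' z.
Proof.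
move=> [s [hs ->]]; elim: s hs => [|d s IH] /=.
  move=> _; exists 0, 1; split; rewrite ?oner_eq0 ?big_nil ?rmorph0 ?mul0r //.
  exact: bnd0.
case/andP => dn0 hs; rewrite big_cons; move: (IH hs) => [a [b [bn0 hab ->]]].
exists (b + a * d), (d * b); split.
- exact: mulD_neq0.
- rewrite degM //; apply: bndD.
    apply: bnd_le (@bnd_deg _ _ b) _; rewrite addrC -{1}(addr0 (deg b)) tlerD2l.
    exact: deg_ge0.
  by rewrite addrC; apply: bndM hab (@bnd_deg _ _ d).
- have pd := phi_neq0 phi_inj dn0; have pb := phi_neq0 phi_inj bn0.
  rewrite rmorphD !rmorphM; field; by apply/andP.
Qed.

Lemma V'_R z : V' z -> R z.
Proof.
move=> [a [b [bn0 hab ->]]]; rewrite {1}[a]monalgE rmorph_sum mulr_suml.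
apply: R_sum => s sa _; rewrite malgU_C rmorphM -mulrA; apply: RM; first exact: RC.
apply: (@recip_key _ _ _ _ phi_inj (count (fun s0 : M => (val s0 < val s)%R) (msupp b)).+1) => //; exact: hab.
Qed.

Lemma frac_ex z : z != 0 -> exists a b, [/\ a != 0, b != 0 & z = phi a / phi b].
Proof.
move=> zn0; have [a [b [bn0 ze]]] := hff.2 z; exists a, b; split => //.
by apply: contraNneq zn0 => a0; rewrite ze a0 rmorph0 mul0r.
Qed.

Lemma Rval : is_valuation_ring R.
Proof.
move=> z /frac_ex [a [b [an0 bn0 ze]]].
case/orP: (tle_total (deg a) (deg b)) => h.
  by left; apply: V'_R; exists a, b; split => //; apply: bnd_le (@bnd_deg _ _ a) h.
right; apply: V'_R; exists b, a; split => //; first by apply: bnd_le (@bnd_deg _ _ b) h.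
by rewrite ze invf_div.
Qed.

Lemma hex z : exists ab : D * D, ab.2 != 0 /\ z = phi ab.1 / phi ab.2.
Proof. by have [a [b [bn0 ze]]] := hff.2 z; exists (a, b). Qed.

Definition frac z : D * D := proj1_sig (constructive_indefinite_description _ (hex z)).
Lemma fracP z : (frac z).2 != 0 /\ z = phi (frac z).1 / phi (frac z).2.
Proof. exact: (proj2_sig (constructive_indefinite_description _ (hex z))). Qed.

Definition v z : G := deg (frac z).2 - deg (frac z).1.

Lemma vE z a b : a != 0 -> b != 0 -> z = phi a / phi b -> v z = deg b - deg a.
Proof.
move=> an0 bn0 ze; rewrite /v; case: (fracP z) => [].
case: (frac z) => a' b' /= bn0' ze'.
have pa := phi_neq0 phi_inj an0; have pb := phi_neq0 phi_inj bn0.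
have pb' := phi_neq0 phi_inj bn0'.
have an0' : a' != 0.
  apply: contraNneq (mulf_neq0 pa (invr_neq0 pb)) => a0.
  by rewrite -ze ze' a0 rmorph0 mul0r.
have e : a' * b = a * b'.
  apply: phi_inj; rewrite !rmorphM.
  have /eqP : phi a' / phi b' = phi a / phi b by rewrite -ze -ze'.
  by rewrite eqr_div // => /eqP.
have := congr1 (@deg G K) e; rewrite !degM // => h.
apply/eqP; rewrite subr_eq addrAC eq_sym subr_eq (addrC (deg b)) h.
by rewrite addrC.
Qed.

Lemma degU t : deg (<< t >> : D) = val t.
Proof.
rewrite /deg (@lead_uniq _ _ _ t) //; rewrite /isLead msuppU1 inE eqxx /=.
by apply/allP => s; rewrite inE => /eqP ->.
Qed.

Lemma deg1 : deg (1 : D) = 0.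
Proof. by rewrite -mpolyC1E degU. Qed.

Lemma Rvg : has_value_group R G.
Proof.
exists v; split.
- move=> x y /frac_ex [a [b [an0 bn0 xe]]] /frac_ex [c [d [cn0 dn0 ye]]].
  rewrite (vE an0 bn0 xe) (vE cn0 dn0 ye) (@vE _ (a * c) (b * d)).
  + by rewrite !degM // opprD addrACA.
  + exact: mulD_neq0.
  + exact: mulD_neq0.
  + by rewrite xe ye !rmorphM invfM mulrACA.
- move=> g; case: (boolP (0 <= g)) => hg.
    exists (phi 1 / phi (<< (exist _ g hg : M) >> : D)); split.
      by rewrite rmorph1 mul1r invr_eq0 phi_neq0 // monalgU_eq0 oner_eq0.
    by rewrite (@vE _ 1 << (exist _ g hg : M) >>) ?oner_neq0 ?monalgU_eq0 ?oner_eq0 // degU deg1 subr0.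
  have hg' : 0 <= - g.
    apply: tle0N; case/orP: (tle_total g 0) => // h; by rewrite h in hg.
  exists (phi (<< (exist _ (- g) hg' : M) >> : D) / phi 1); split.
    by rewrite rmorph1 divr1 phi_neq0 // monalgU_eq0 oner_eq0.
  by rewrite (@vE _ << (exist _ (- g) hg' : M) >> 1) ?oner_neq0 ?monalgU_eq0 ?oner_eq0 // degU deg1 sub0r opprK.
- move=> x xn0; split.
    move/R_V' => [a [b [bn0 hab xe]]].
    have an0 : a != 0 by apply: contraNneq xn0 => a0; rewrite xe a0 rmorph0 mul0r.
    by rewrite (vE an0 bn0 xe) tsubr_ge0; apply: deg_le_bnd.
  have [a [b [an0 bn0 xe]]] := frac_ex xn0.
  rewrite (vE an0 bn0 xe) tsubr_ge0 => h; apply: V'_R; exists a, b; split => //.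
  exact: bnd_le (@bnd_deg _ _ a) h.
Qed.

End Main.

Unset Implicit Arguments.

Theorem mainTheorem1 (G : totOrdAbGroup) (K : fieldType) (F : fieldType)
    (phi : {rmorphism semigroup_algebra K G -> F}) :
  is_fraction_field phi ->
  is_valuation_ring (recip_compl phi) /\ has_value_group (recip_compl phi) G.
Proof. by move=> h; split; [exact: Rval | exact: Rvg]. Qed.
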